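(* Let $\mathbb Q$ be the rationals and $D$ an uncountable set disjoint from $\mathbb Q$. Let $X=\mathbb Q\cup D$ with the topology in which every point of $D$ is isolated and a neighborhood base at $q\in\mathbb Q$ consists of the sets $I\cup (D\setminus C)$, where $I\subseteq\mathbb Q$ is a Euclidean open neighborhood of $q$ in $\mathbb Q$ and $C\subseteq D$ is countable. Then $X$ is a $T_1$-space, the strong Choquet game $Ch(X)$ is $\alpha$-favorable (indeed $\alpha$ has a winning strategy depending only on $\beta$'s last move), and $X$ has no rich family of Baire spaces; in fact, every separable subspace $S$ of $X$ with $\mathbb Q\subseteq S$ is not a Baire space.
   Context: A topological space is a Baire space if every countable intersection of dense open subsets is dense. The strong Choquet game $Ch(X)$: players $\beta$ and $\alpha$ alternate, $\beta$ first; at round $n$, $\beta$ chooses a point $x_n$ and an open set $V_n\ni x_n$ (with $V_n\subseteq U_{n-1}$ if $n\ge1$), then $\alpha$ chooses an open $U_n$ with $x_n\in U_n\subseteq V_n$; $\alpha$ wins if $\bigcap_n U_n\neq\emptyset$. $Ch(X)$ is $\alpha$-favorable if $\alpha$ has a winning strategy. A rich family of Baire spaces for $X$ is a family $\mathcal F$ of nonempty separable closed Baire subspaces of $X$ such that every separable subset of $X$ is contained in some $F\in\mathcal F$, and $\overline{\bigcup_{n<\omega}F_n}\in\mathcal F$ whenever $\{F_n:n<\omega\}\subseteq\mathcal F$. *)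

(* Defs.v *)
From HB Require Import structures.
From mathcomp Require Import all_boot all_order all_algebra.
From Stdlib Require Import List.
Set Implicit Arguments. Unset Strict Implicit. Unset Printing Implicit Defensive.
Import Order.TTheory GRing.Theory Num.Theory.

Section Topology.
Variable T : Type.
Variable op : (T -> Prop) -> Prop.   (* the open sets *)

Definition countable (A : T -> Prop) : Prop :=
  exists f : T -> nat, forall x y, A x -> A y -> f x = f y -> x = y.

Definition T1_space : Prop :=
  forall x y : T, x <> y -> exists U, op U /\ U x /\ ~ U y.

Definition closed (A : T -> Prop) : Prop := op (fun x => ~ A x).

Definition closure (A : T -> Prop) : T -> Prop :=
  fun x => forall U, op U -> U x -> exists y, A y /\ U y.

Definition rel_open (S V : T -> Prop) : Prop :=
  (forall x, V x -> S x) /\ exists U, op U /\ forall x, V x <-> (U x /\ S x).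

Definition dense_in (S A : T -> Prop) : Prop :=
  forall U, op U -> (exists x, S x /\ U x) -> exists y, S y /\ A y /\ U y.

Definition separable (S : T -> Prop) : Prop :=
  exists A, (forall x, A x -> S x) /\ countable A /\ dense_in S A.

Definition baire_sub (S : T -> Prop) : Prop :=
  forall G : nat -> T -> Prop,
    (forall n, rel_open S (G n) /\ dense_in S (G n)) ->
    dense_in S (fun x => S x /\ forall n, G n x).

Definition rich_family (F : (T -> Prop) -> Prop) : Prop :=
  (forall A, F A -> (exists x, A x) /\ separable A /\ closed A /\ baire_sub A) /\
  (forall S, separable S -> exists A, F A /\ forall x, S x -> A x) /\
  (forall Fs : nat -> T -> Prop, (forall n, F (Fs n)) ->
     F (closure (fun x => exists n, Fs n x))).

(* ---------- The strong Choquet game Ch(T) ----------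
   A move of beta is a pair (x_n, V_n).  A strategy for alpha maps the finite
   history of beta's moves [(x_0,V_0); ...; (x_n,V_n)] (alpha's own earlier
   moves are determined by the strategy) to alpha's answer U_n. *)
Definition strategy := list (T * (T -> Prop)) -> (T -> Prop).

Definition hist (b : nat -> T * (T -> Prop)) (n : nat) : list (T * (T -> Prop)) :=
  map b (seq 0 (S n)).

Definition legal_upto (sigma : strategy) (b : nat -> T * (T -> Prop)) (n : nat) : Prop :=
  forall k, k <= n ->
    op (snd (b k)) /\ snd (b k) (fst (b k)) /\
    (forall k', k = S k' -> forall y, snd (b k) y -> sigma (hist b k') y).

Definition winning (sigma : strategy) : Prop :=
  (forall b n, legal_upto sigma b n ->
     op (sigma (hist b n)) /\ sigma (hist b n) (fst (b n)) /\
     (forall y, sigma (hist b n) y -> snd (b n) y)) /\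
  (forall b, (forall n, legal_upto sigma b n) ->
     exists x, forall n, sigma (hist b n) x).

Definition alpha_favorable : Prop := exists sigma, winning sigma.

Definition from_last (f : T -> (T -> Prop) -> (T -> Prop)) : strategy :=
  fun h => match rev h with
           | nil => fun _ => False
           | (x, V) :: _ => f x V
           end.
End Topology.

Local Open Scope ring_scope.

Definition rat_open (I : rat -> Prop) : Prop :=
  forall x, I x -> exists e : rat, 0 < e /\ forall y, `|y - x| < e -> I y.

Definition uncountable (D : Type) : Prop := ~ countable (fun _ : D => True).

(* X = rat + D (disjoint union); points of D isolated; basic neighbourhoods of q
   are I ∪ (D \ C) with I Euclidean-open nbhd of q in Q and C ⊆ D countable. *)
Definition openX (D : Type) (U : (rat + D)%type -> Prop) : Prop :=
  forall q, U (inl q) ->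
    exists (I : rat -> Prop) (C : D -> Prop),
      rat_open I /\ I q /\ countable C /\
      (forall r, I r -> U (inl r)) /\ (forall d, ~ C d -> U (inr d)).

(* Main.v *)
Require Import Defs.
From mathcomp Require Import all_boot all_order all_algebra.
From Stdlib Require Import Classical ClassicalEpsilon List.
Import Order.TTheory GRing.Theory Num.Theory.

Section X.
Variable D : Type.

Local Notation X := (rat + D)%type.

Lemma rat_openT : rat_open (fun _ => True).
Proof. move=> x _; exists 1%R; split => //. Qed.

Lemma count_empty (T : Type) : Defs.countable (fun _ : T => False).
Proof. exists (fun _ => 0%N) => x y []. Qed.

Lemma open_compl1 (y : X) : openX (fun z => z <> y).
Proof.
move=> q Hq; case: y Hq => [r|d] Hq.
- exists (fun s => s <> r), (fun _ => False); split; [|split; [|split; [|split]]].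
  + move=> x Hx; exists `|x - r|%R; split.
      by rewrite normr_gt0 subr_eq0; apply/eqP.
    by move=> z Hz Hzr; subst z; move: Hz; rewrite distrC ltxx.
  + by move=> E; apply: Hq; rewrite E.
  + exact: count_empty.
  + by move=> s Hs [] E; apply: Hs.
  + by [].
- exists (fun _ => True), (fun e => e = d); split; [exact: rat_openT|split; [by []|split; [|split]]].
  + by exists (fun _ => 0%N) => a b -> ->.
  + by [].
  + by move=> e He [] E; apply: He.
Qed.

Lemma open_single (d : D) : openX (fun z : X => z = inr d).
Proof. by move=> q. Qed.

Lemma T1X : T1_space (@openX D).
Proof. move=> x y Hxy; exists (fun z => z <> y); split; [exact: open_compl1|split => //]. Qed.

Definition fstrat (x : X) (V : X -> Prop) : X -> Prop :=
  match x with inl _ => V | inr d => fun z => z = inr d end.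

Lemma from_last_hist (f : X -> (X -> Prop) -> X -> Prop) b n :
  from_last f (hist b n) = f (fst (b n)) (snd (b n)).
Proof.
rewrite /from_last /hist List.seq_S List.map_app List.rev_app_distr /=.
by case: (b n).
Qed.

Lemma uncount_avoid (hD : uncountable D) (P : nat -> D -> Prop) :
  (forall n, exists C, Defs.countable C /\ forall d, ~ C d -> P n d) ->
  exists d, forall n, P n d.
Proof.
move=> H; apply: NNPP => Hn; apply: hD.
have H2 : forall d, exists n, ~ P n d.
  move=> d; apply: NNPP => H3; apply: Hn; exists d => n.
  by apply: NNPP => H4; apply: H3; exists n.
pose Cf n := proj1_sig (constructive_indefinite_description _ (H n)).
have HCf : forall n, Defs.countable (Cf n) /\ forall d, ~ Cf n d -> P n d.
  move=> n; exact: (proj2_sig (constructive_indefinite_description _ (H n))).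
pose fn n := proj1_sig (constructive_indefinite_description _ (proj1 (HCf n))).
have Hfn : forall n x y, Cf n x -> Cf n y -> fn n x = fn n y -> x = y.
  move=> n; exact: (proj2_sig (constructive_indefinite_description _ (proj1 (HCf n)))).
pose N d := proj1_sig (constructive_indefinite_description _ (H2 d)).
have HN : forall d, ~ P (N d) d.
  move=> d; exact: (proj2_sig (constructive_indefinite_description _ (H2 d))).
have HC : forall d, Cf (N d) d.
  move=> d; apply: NNPP => Hc; apply: (HN d); exact: (proj2 (HCf (N d)) d Hc).
exists (fun d => pickle (N d, fn (N d) d)) => x y _ _ E.
have := pcan_inj (@pickleK_inv _) E; case=> E1 E2.
apply: (Hfn (N x)) => //; first by rewrite E1.
by rewrite E2 E1.
Qed.

Lemma winX (hD : uncountable D) : winning (@openX D) (from_last fstrat).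
Proof.
have P1 : forall b n, legal_upto (@openX D) (from_last fstrat) b n ->
     openX (from_last fstrat (hist b n)) /\ from_last fstrat (hist b n) (fst (b n)) /\
     (forall y, from_last fstrat (hist b n) y -> snd (b n) y).
  move=> b n Hl; have [Hop [Hx _]] := Hl n (leqnn n).
  rewrite from_last_hist; case: (b n) Hop Hx => [[q|d] V] /= Hop Hx.
  - by split => //; split.
  - split; first exact: open_single.
    by split => // y ->.
split; first exact: P1.
move=> b Hall.
pose U n := from_last fstrat (hist b n).
have mono1 : forall k y, U k.+1 y -> U k y.
  move=> k y Hy; have [_ [_ H3]] := Hall k.+1 k.+1 (leqnn _).
  apply: (H3 k erefl); exact: (proj2 (proj2 (P1 b k.+1 (Hall _))) y Hy).
have mono : forall k m y, (k <= m)%N -> U m y -> U k y.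
  move=> k m y; elim: m => [|m IH].
    by rewrite leqn0 => /eqP ->.
  rewrite leq_eqVlt => /orP [/eqP -> //|Hk] Hy.
  by apply: IH => //; apply: mono1.
have Hin : forall n, U n (fst (b n)) := fun n => proj1 (proj2 (P1 b n (Hall n))).
case: (classic (exists n d, fst (b n) = inr d)) => [[n [d Hd]]|Hno].
- have Un : forall y, U n y -> y = inr d.
    by move=> y; rewrite /U from_last_hist Hd.
  exists (inr d) => m.
  case: (leqP m n) => Hmn.
    by apply: (mono m n) => //; rewrite -Hd; apply: Hin.
  have Hm := Hin m.
  have E : fst (b m) = inr d by apply: Un; apply: (mono n m) => //; exact: ltnW.
  by rewrite -E.
- have Hq : forall n, exists q, fst (b n) = inl q.
    move=> n; case E: (fst (b n)) => [q|d]; first by exists q.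
    by exfalso; apply: Hno; exists n, d.
  have Ue : forall n, U n = snd (b n).
    by move=> n; rewrite /U from_last_hist; case: (Hq n) => q ->.
  have [d Hd] : exists d, forall n, snd (b n) (inr d).
    apply: uncount_avoid => // n.
    have [Hop [Hx _]] := Hall n n (leqnn n).
    case: (Hq n) => q Eq; rewrite Eq in Hx.
    have [I [C [_ [_ [HC [_ HD]]]]]] := Hop q Hx.
    by exists C.
  by exists (inr d) => n; rewrite -/(U n) Ue.
Qed.

Lemma notbaire (S : X -> Prop) : separable (@openX D) S -> (forall q, S (inl q)) ->
  ~ baire_sub (@openX D) S.
Proof.
move=> [A [HAS [[fA HfA] HAd]]] HQ Hb.
have SDA : forall d, S (inr d) -> A (inr d).
  move=> d Sd; have [y [_ [Ay Ey]]] := HAd _ (open_single d) (ex_intro _ (inr d) (conj Sd erefl)).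
  by rewrite -Ey.
pose G n := fun z : X => S z /\ match @pickle_inv rat n with Some q => z <> inl q | None => True end.
have HG : forall n, rel_open (@openX D) S (G n) /\ dense_in (@openX D) S (G n).
  move=> n; split.
    split; first by move=> x [].
    exists (fun z => match @pickle_inv rat n with Some q => z <> inl q | None => True end).
    split; last by move=> x; rewrite /G; split => -[].
    case: (@pickle_inv rat n) => [q|]; first exact: open_compl1.
    by move=> q _; exists (fun _ => True), (fun _ => False); do !split => //;
      [exact: rat_openT|exact: count_empty].
  move=> U HU [x [Sx Ux]]; rewrite /G.
  case E: (@pickle_inv rat n) => [q0|]; last by exists x.
  case: (classic (x = inl q0)) => [Ex|Nx]; last by exists x.
  subst x; have [I [C [HI [Iq [_ [HIU _]]]]]] := HU q0 Ux.
  have [e [He HIe]] := HI q0 Iq.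
  exists (inl (q0 + e / 2%:R)%R); split; first exact: HQ.
  split; last first.
    apply: HIU; apply: HIe; rewrite addrAC subrr add0r ger0_norm.
      by rewrite ltr_pdivrMr // ltr_pMr // ltr1n.
    by rewrite divr_ge0 // ltW.
  split; first exact: HQ.
  case=> /eqP; rewrite -subr_eq0 addrAC subrr add0r mulf_eq0 invr_eq0 pnatr_eq0 /= orbF.
  by move=> /eqP He0; move: He; rewrite He0 ltxx.
have Hd := Hb G HG.
pose U := fun z : X => match z with inl _ => True | inr d => ~ S (inr d) end.
have HU : openX U.
  move=> q _; exists (fun _ => True), (fun d => S (inr d)); split; first exact: rat_openT.
  split => //; split => //.
  exists (fun d => fA (inr d)) => a b Sa Sb E.
  by have := HfA _ _ (SDA _ Sa) (SDA _ Sb) E; case.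
have [y [Sy [[_ Hy] Uy]]] := Hd U HU (ex_intro _ (inl 0%R) (conj (HQ 0%R) I)).
case: y Sy Hy Uy => [q|d] Sy Hy Uy.
- by have [_] := Hy (pickle q); rewrite pickleK_inv.
- by apply: Uy.
Qed.

End X.

Theorem mainTheorem7 (D : Type) (hD : uncountable D) :
  T1_space (@openX D) /\
  alpha_favorable (@openX D) /\
  (exists f, winning (@openX D) (from_last f)) /\
  ~ (exists F, rich_family (@openX D) F) /\
  (forall S : (rat + D)%type -> Prop,
      separable (@openX D) S -> (forall q : rat, S (inl q)) ->
      ~ baire_sub (@openX D) S).
Proof.
split; first exact: T1X.
split; first by exists (from_last (@fstrat D)); exact: winX.
split; first by exists (@fstrat D); exact: winX.
split; last exact: (@notbaire D).
move=> [F [H1 [H2 _]]].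
pose S0 := fun z : (rat + D)%type => match z with inl _ => True | inr _ => False end.
have sep0 : separable (@openX D) S0.
  exists S0; split => //; split; last by move=> U _ [x [Sx Ux]]; exists x.
  exists (fun z => match z with inl q => pickle q | inr _ => 0%N end).
  move=> [a|a] [b|b] //= _ _ E.
  by rewrite (pcan_inj (@pickleK_inv _) E).
have [A [FA SA]] := H2 _ sep0.
have [_ [sepA [_ bA]]] := H1 _ FA.
by apply: (@notbaire D A sepA) => // q; apply: SA.
Qed.
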